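(* Every even weakly $\varphi^*$-practical number is practical.
   Context: $\varphi^*$ is the multiplicative function with $\varphi^*(p^k)=p^k-1$ for primes $p$ and $k\ge1$ (unitary totient). For multiplicative $f$, $S_f(n)=\sum_{d\mid n}f(d)$. Write $n=p_1^{e_1}\cdots p_k^{e_k}$ with distinct primes ordered so that $f(p_1)\le\cdots\le f(p_k)$, and let $m_i=\prod_{j=1}^{i}p_j^{e_j}$ for $0\le i<k$ ($m_0=1$); $n$ is weakly $f$-practical if $f(p_{i+1})\le S_f(m_i)+1$ for every $0\le i<k$. A positive integer $n$ is practical if every integer $m$ with $1\le m\le n$ is a sum of distinct positive divisors of $n$. *)

(* Defs.v *)
From mathcomp Require Import all_boot.
Set Implicit Arguments. Unset Strict Implicit. Unset Printing Implicit Defensive.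

(* Unitary totient: multiplicative, phistar (p^k) = p^k - 1. *)
Definition phistar (n : nat) : nat :=
  \prod_(p <- primes n) (p ^ logn p n - 1).

Definition Sf (f : nat -> nat) (n : nat) : nat :=
  \sum_(d <- divisors n) f d.

(* The distinct prime divisors of n, ordered so that f(p_1) <= ... <= f(p_k)
   (stable sort; ties broken by increasing prime). *)
Definition fprimes (f : nat -> nat) (n : nat) : seq nat :=
  sort (fun p q => f p <= f q) (primes n).

Definition m_part (f : nat -> nat) (n i : nat) : nat :=
  \prod_(p <- take i (fprimes f n)) p ^ logn p n.

Definition weakly_f_practical (f : nat -> nat) (n : nat) : Prop :=
  forall i, i < size (fprimes f n) ->
    f (nth 0 (fprimes f n) i) <= Sf f (m_part f n i) + 1.

Definition practical (n : nat) : Prop :=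
  0 < n /\ forall m, 1 <= m <= n ->
    exists s : seq nat, subseq s (divisors n) /\ sumn s = m.

(* Main.v *)
Require Import Defs.
From mathcomp Require Import all_boot zify.

Definition rep (P : pred nat) (k : nat) :=
  exists s : seq nat, [/\ uniq s, all P s & sumn s = k].

Definition complete (m : nat) :=
  forall k, k <= Sf id m -> rep (fun d => d %| m) k.

Lemma sumn_mul p s : sumn (map (muln p) s) = p * sumn s.
Proof. elim: s => [|x s IH] /=; [by rewrite muln0 | by rewrite IH mulnDr]. Qed.

Lemma combine (m M N p : nat) :
  complete m -> complete M -> 0 < p -> p <= Sf id m + 1 ->
  (forall d, d %| m -> ~~ (p %| d)) ->
  (forall d, d %| m -> d %| N) -> (forall d, d %| M -> p * d %| N) ->
  forall k, k <= Sf id m + p * Sf id M -> rep (fun d => d %| N) k.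
Proof.
move=> cm cM p0 hp ndv hm hM k hk.
set a := Sf id m in hp hk cm; set b := Sf id M in hk cM.
set q := minn (k %/ p) b.
have hq : q <= b by rewrite geq_minr.
have hpq : p * q <= k.
  apply: (@leq_trans (p * (k %/ p))); first by rewrite leq_mul2l geq_minl orbT.
  by rewrite mulnC leq_divM.
have hr : k - p * q <= a.
  rewrite /q; case: (leqP (k %/ p) b) => h.
  - have := ltn_pmod k p0; have := divn_eq k p; lia.
  - lia.
have [s1 [u1 a1 e1]] := cM q hq.
have [s2 [u2 a2 e2]] := cm _ hr.
exists (map (muln p) s1 ++ s2); split.
- rewrite cat_uniq u2 map_inj_uniq ?u1 //=; last first.
    by move=> x y /eqP; rewrite eqn_pmul2l // => /eqP.
  rewrite andbT; apply/hasPn => x xs2; apply/mapP => -[y _ xy].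
  have := ndv x ((allP a2) x xs2); rewrite xy dvdn_mulr //.
- rewrite all_cat; apply/andP; split.
  + apply/allP => x /mapP [y ys ->]; apply: hM; exact: (allP a1).
  + apply/allP => x xs; apply: hm; exact: (allP a2).
- rewrite sumn_cat sumn_mul e1 e2; lia.
Qed.

Lemma muln_inj p : 0 < p -> injective (muln p).
Proof. by move=> p0 x y /eqP; rewrite eqn_pmul2l // => /eqP. Qed.

Lemma divisors_split m p e : prime p -> coprime p m -> 0 < m ->
  perm_eq (divisors (m * p ^ e.+1))
          (divisors m ++ map (muln p) (divisors (m * p ^ e))).
Proof.
move=> pp cpm m0.
have p0 : 0 < p := prime_gt0 pp.
have M0 : 0 < m * p ^ e by rewrite muln_gt0 m0 expn_gt0 p0.
have N0 : 0 < m * p ^ e.+1 by rewrite muln_gt0 m0 expn_gt0 p0.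
have ndv : forall d, d %| m -> ~~ (p %| d).
  move=> d dm; apply/negP => pd.
  by move: cpm; rewrite prime_coprime // (dvdn_trans pd dm).
apply: uniq_perm; first exact: divisors_uniq.
  rewrite cat_uniq divisors_uniq map_inj_uniq ?divisors_uniq //=; last exact: muln_inj.
  rewrite andbT; apply/hasPn => x /mapP [y _ ->]; rewrite -dvdn_divisors //.
  by apply/negP => /ndv; rewrite dvdn_mulr.
move=> x; rewrite mem_cat -!dvdn_divisors //.
case pxE: (p %| x).
- move/dvdnP: pxE => [y ->].
  have -> : (y * p %| m) = false.
    by apply/negbTE/negP => /ndv; rewrite dvdn_mull.
  rewrite mulnC mem_map; last exact: muln_inj.
  by rewrite -dvdn_divisors // expnS mulnCA dvdn_pmul2l.
- have -> : (x \in [seq p * i | i <- divisors (m * p ^ e)]) = false.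
    apply/negbTE/negP => /mapP [y _ xy]; move: pxE; by rewrite xy dvdn_mulr.
  rewrite orbF Gauss_dvdl //.
  rewrite coprime_pexpr // coprime_sym prime_coprime //; by rewrite pxE.
Qed.

Lemma Sf_split f m p e : prime p -> coprime p m -> 0 < m ->
  Sf f (m * p ^ e.+1) = Sf f m + \sum_(d <- divisors (m * p ^ e)) f (p * d).
Proof.
move=> pp cpm m0; rewrite /Sf (perm_big _ (@divisors_split m p e pp cpm m0)).
by rewrite big_cat big_map.
Qed.

Lemma Sf_id_split m p e : prime p -> coprime p m -> 0 < m ->
  Sf id (m * p ^ e.+1) = Sf id m + p * Sf id (m * p ^ e).
Proof.
move=> pp cpm m0; rewrite (@Sf_split id m p e pp cpm m0) /Sf big_distrr //.
Qed.

Lemma prod_sub1 (s : seq nat) (F : nat -> nat) :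
  (forall x, x \in s -> 0 < F x) ->
  \prod_(x <- s) (F x - 1) + (s != [::]) <= \prod_(x <- s) F x.
Proof.
elim: s => [|x s IH] H; first by rewrite !big_nil.
rewrite !big_cons /=.
have Hs : forall y, y \in s -> 0 < F y by move=> y ys; apply: H; rewrite inE ys orbT.
have := IH Hs.
have Bp : 0 < \prod_(y <- s) F y.
  rewrite big_seq_cond; apply: prodn_cond_gt0 => i /andP [+ _]; exact: Hs.
have Fx : 0 < F x by apply: H; rewrite inE eqxx.
move: Bp Fx.
set A := \prod_(y <- s) (F y - 1); set B := \prod_(y <- s) F y.
move=> Bp Fx h.
have hA : A <= B by move: h; case: (s != [::]) => /=; lia.
have : (F x - 1) * A <= (F x - 1) * B by rewrite leq_mul2l hA orbT.
nia.
Qed.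

Lemma prod_primes n : 0 < n -> \prod_(p <- primes n) p ^ logn p n = n.
Proof.
move=> n0; rewrite [RHS](prod_prime_decomp n0) prime_decompE big_map //.
Qed.

Lemma phistar_bound d : 0 < d -> phistar d + (1 < d) <= d.
Proof.
move=> d0; rewrite /phistar.
have := @prod_sub1 (primes d) (fun p => p ^ logn p d).
rewrite /= (@prod_primes d d0).
have -> : (primes d != [::]) = (1 < d) by rewrite primes_eq0 -leqNgt.
apply=> x; rewrite mem_primes => /and3P [px _ _]; rewrite expn_gt0 prime_gt0 //.
Qed.

Lemma Sf_phistar_lt m : 1 < m -> Sf phistar m + 1 <= Sf id m.
Proof.
move=> m1; have m0 : 0 < m by lia.
rewrite /Sf !(bigD1_seq m (divisors_id m0) (divisors_uniq m)) /=.
have := @phistar_bound m m0; rewrite m1 => h.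
rewrite addnAC; apply: leq_add => //.
rewrite big_seq_cond [X in _ <= X]big_seq_cond; apply: leq_sum => i /andP [hi _].
have i0 : 0 < i by move: hi; rewrite -dvdn_divisors // => /dvdn_gt0; apply.
by have := @phistar_bound i i0; lia.
Qed.

Lemma Sf_id_ge m : 0 < m -> m <= Sf id m.
Proof.
move=> m0; rewrite /Sf (bigD1_seq m (divisors_id m0) (divisors_uniq m)) /=.
exact: leq_addr.
Qed.

Lemma phistar_prime p : prime p -> phistar p = p - 1.
Proof. by move=> pp; rewrite /phistar primes_prime // big_seq1 logn_prime // eqxx expn1. Qed.

Lemma fprimes_phistar n : fprimes phistar n = primes n.
Proof.
rewrite /fprimes; apply: sorted_sort.
  by move=> y x z; apply: leq_trans.
apply: (@sub_in_sorted _ (fun p => prime p) ltn).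
- move=> x y px py /= h; rewrite !phistar_prime //; lia.
- by apply/allP => x; rewrite mem_primes => /and3P [].
- exact: sorted_primes.
Qed.

Lemma complete1 : complete 1.
Proof.
move=> k; rewrite /Sf /= big_cons big_nil /= => hk.
case: k hk => [|[|//]] _.
- by exists [::].
- by exists [:: 1].
Qed.

Lemma complete_pow m p : complete m -> prime p -> coprime p m -> 0 < m ->
  p <= Sf id m + 1 -> forall e, complete (m * p ^ e).
Proof.
move=> cm pp cpm m0 hp; elim=> [|e IH]; first by rewrite expn0 muln1.
have p0 : 0 < p := prime_gt0 pp.
have ndv : forall d, d %| m -> ~~ (p %| d).
  move=> d dm; apply/negP => pd.
  by move: cpm; rewrite prime_coprime // (dvdn_trans pd dm).
move=> k; rewrite (@Sf_id_split m p e pp cpm m0) => hk.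
apply: (@combine m (m * p ^ e) (m * p ^ e.+1) p cm IH p0 hp ndv _ _ k hk).
- by move=> d dm; apply: dvdn_mulr.
- by move=> d dM; rewrite expnS mulnCA dvdn_pmul2l.
Qed.

Theorem lemma5p1 (n : nat) :
  0 < n -> ~~ odd n -> weakly_f_practical phistar n -> practical n.
Proof.
move=> n0 ev hw.
rewrite /weakly_f_practical /m_part fprimes_phistar in hw.
set s := primes n in hw.
have key : forall i, i <= size s ->
   [/\ complete (\prod_(p <- take i s) p ^ logn p n),
       0 < i -> 1 < \prod_(p <- take i s) p ^ logn p n &
       0 < \prod_(p <- take i s) p ^ logn p n].
  elim=> [|i IH] hi.
    by rewrite take0 big_nil; split => //; exact: complete1.
  have his : i < size s by lia.
  have [IH1 IH2 IH3] := IH (ltnW his).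
  have := IH1; have := IH2; have := IH3; move: (hw i his).
  rewrite (take_nth 0 his) big_rcons /=.
  set m := \prod_(p <- take i s) p ^ logn p n.
  set p := nth 0 s i.
  have ps : p \in s by apply: mem_nth.
  have := ps; rewrite mem_primes => /and3P [pp _ pn].
  have : 0 < logn p n by rewrite logn_gt0.
  case E: (logn p n) => [//|e] _.
  move=> hwi m0 m1 cm.
  have cpm : coprime p m.
    have pnt : p \notin take i s.
      have u := primes_uniq n; rewrite -/s -(cat_take_drop i s) cat_uniq in u.
      case/and3P: u => _ /hasPn H _; apply: H.
      by rewrite (drop_nth 0 his) inE eqxx.
    rewrite /m big_seq; elim/big_ind: _ => //; first exact: coprimen1.
    - by move=> x y hx hy; rewrite coprimeMr hx hy.
    - move=> q qt; apply: coprimeXr.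
      have qs : q \in s := mem_take qt.
      move: qs; rewrite mem_primes => /and3P [qp _ _].
      rewrite prime_coprime // dvdn_prime2 //.
      by apply/eqP => pq; move: pnt; rewrite pq qt.
  have hp : p <= Sf id m + 1.
    move: hwi; rewrite phistar_prime //.
    have [i0|ipos] := posnP i.
    + have -> : m = 1 by rewrite /m i0 take0 big_nil.
      have -> : Sf id 1 = 1 by rewrite /Sf /= big_cons big_nil.
      have -> : p = pdiv n.
        by rewrite /p i0 /pdiv -/s; case: (s) ps.
      move=> _; apply: (@leq_trans 2) => //.
      by apply: pdiv_min_dvd => //; rewrite dvdn2.
    + have := @Sf_phistar_lt m (m1 ipos); lia.
  have cm' := @complete_pow m p cm pp cpm m0 hp e.+1.
  split => //.
  - move=> _; have h2 : 2 <= p ^ e.+1.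
      apply: (leq_trans (prime_gt1 pp)); rewrite -{1}(expn1 p) leq_pexp2l // prime_gt0 //.
    nia.
  - by rewrite muln_gt0 m0 expn_gt0 prime_gt0.
have [c _ _] := key (size s) (leqnn _).
rewrite take_size /s prod_primes // in c.
split => // k /andP [k1 kn].
have [t [ut alt st]] := c k (leq_trans kn (@Sf_id_ge n n0)).
exists (filter (mem t) (divisors n)); split; first exact: filter_subseq.
rewrite -st; apply: perm_sumn; apply: uniq_perm => //.
  exact: filter_uniq (divisors_uniq n).
move=> x; rewrite mem_filter /=.
case xt: (x \in t) => //=.
by rewrite -dvdn_divisors // (allP alt x xt).
Qed.
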